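(* Let $\mathcal{C}$, $C_0=\{c_0\}$, $f$ and $r$ be as in the context. Fix $\lambda\in[0,1]$, a random trip-detail variable $X$ with distribution $P$, a real-valued measurable function $u(X)$, and a conditional distribution of the realized fare $p'\ge0$ given $X$ (all expectations below assumed finite). Let $V^*:\mathcal C\to\mathbb{R}$ and $V^*_c(p',C)$ satisfy, for all $C\in\mathcal C$ and $p'\ge0$, $$V^*_c(p',C)=\max_{c\in C}\{r(p',c)+V^*(f(C,c))\},$$ $$V^*(C)=V^*(f(C))+\lambda\,\mathbb{E}_X\Big[\max\Big(u(X)+\mathbb{E}_{p'\mid X}[V^*_c(p',C)]-V^*(f(C)),\,0\Big)-\max\big(u(X),0\big)\Big],\qquad V^*(C_0)=0.$$ For $C\in\mathcal C$ and a function $g$ of the fare, define $$\mathbb{E}_{x',p'\mid C}\big[I(x'=1)\,g(p')\big]:=\lambda\,\mathbb{E}_X\Big[I\Big(u(X)+\mathbb{E}_{p'\mid X}[V^*_c(p',C)]-V^*(f(C))\ge0\Big)\,\mathbb{E}_{p'\mid X}[g(p')]\Big]$$ (so for $C=C_0$ the indicator is $I(u(X)\ge0)$). Let $V^L,V^U:\mathcal C\to\mathbb{R}$ satisfy $V^L(C_0)=V^U(C_0)=0$ and, for all $C\in\mathcal C$, $$V^L(C)=V^L(f(C))+\mathbb{E}_{x',p'\mid C_0}\big[I(x'=1)\,(V^L_c(p',C)-V^L(f(C)))\big],\quad V^L_c(p',C)=\max_{c\in C}[r(p',c)+V^L(f(C,c))],$$ $$V^U(C)=V^U(f(C))+\mathbb{E}_{x',p'\mid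 C}\big[I(x'=1)\,(V^U_c(p',C)-V^U(f(C)))\big],\quad V^U_c(p',C)=\max_{c\in C}[r(p',c)+V^U(f(C,c))].$$ Then $V^L(C)\le V^*(C)\le V^U(C)$ for all $C\in\mathcal C$.
   Context: A coupon group is a triple $c=\langle v,T,n\rangle\in\mathbb{R}\times\mathbb{N}\times\mathbb{N}^+$ (face value $v$, remaining time to expiration $T$, number of coupons $n$). The default (zero-valued) group is $c_0=\langle 0,0,1\rangle$. A coupon set is a finite set of coupon groups containing $c_0$ in which no two groups have the same pair $(v,T)$; $\mathcal C$ is the set of all coupon sets and $C_0=\{c_0\}$. For a group, $f_c(\langle v,T,n\rangle)=\langle v,T-1,n\rangle$ if $v>0$, $n>0$ and $T\ge 1$, and $f_c(\langle v,T,n\rangle)=c_0$ otherwise. For $C\in\mathcal C$ and $c=\langle v,T,n\rangle\in C$, $f(C,c)=\{f_c(c'):c'\in C\setminus\{c\}\}\cup\{f_c(\langle v,T,n-1\rangle)\}$ and $f(C):=f(C,c_0)$. The redemption value is $r(p',\langle v,T,n\rangle)=\min(v,p')$ for a realized fare $p'\ge 0$. $I(\cdot)$ is the indicator function. $\mathbb{E}_X$ is expectation over $X\sim P$ and $\mathbb{E}_{p'\mid X}$ over the realized fare given $X$. Interpretation: $\lambda$ is the per-time-step probability of a trip demand, $u(X)$ the utility gain from choosing the target mobility service, $V^*$ the optimal (undiscounted) net value of a coupon set, and $x'$ the indicator that a trip is served by the target service in the time step under the optimal policy. *)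

(* Defs.v *)
From HB Require Import structures.
From mathcomp Require Import all_boot all_order all_algebra.
From mathcomp Require Import finmap.
From mathcomp Require Import all_classical all_reals all_analysis.
Set Implicit Arguments. Unset Strict Implicit. Unset Printing Implicit Defensive.
Import Order.TTheory GRing.Theory Num.Theory.
Local Open Scope ring_scope.
Local Open Scope fset_scope.

Section Coupons.
Variable R : realType.

(* a coupon group <v, T, n> is ((v, T), n) *)
Definition group := (R * nat * nat)%type.
Definition gv (c : group) : R := c.1.1.
Definition gT (c : group) : nat := c.1.2.
Definition gn (c : group) : nat := c.2.

Definition c0 : group := (0, 0%N, 1%N).

Definition is_cset (C : {fset group}) : Prop :=
  [/\ c0 \in C,
      (forall c, c \in C -> (0 < gn c)%N) &
      (forall c c', c \in C -> c' \in C -> c.1 = c'.1 -> c = c')].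

Definition C0 : {fset group} := [fset c0].

Definition fc (c : group) : group :=
  if (0 < gv c) && (0 < gn c)%N && (1 <= gT c)%N
  then (gv c, (gT c).-1, gn c) else c0.

Definition fCc (C : {fset group}) (c : group) : {fset group} :=
  [fset fc c' | c' in C `\ c] `|` [fset fc (gv c, gT c, (gn c).-1)].

Definition fC (C : {fset group}) : {fset group} := fCc C c0.

Definition rv (p : R) (c : group) : R := Num.min (gv c) p.

(* V_c(p', C) = max_{c in C} [ r(p',c) + V(f(C,c)) ]  (c0 \in C for coupon sets,
   so seeding the max with the c0 term does not change its value) *)
Definition Vc (V : {fset group} -> R) (p : R) (C : {fset group}) : R :=
  let seed := (rv p c0 + V (fCc C c0))%R in
  \big[Num.max/seed]_(c <- C) (rv p c + V (fCc C c))%R.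

End Coupons.

(* Main.v *)
Require Import Defs.
From HB Require Import structures.
From mathcomp Require Import all_boot all_order all_algebra.
From mathcomp Require Import finmap.
From mathcomp Require Import all_classical all_reals all_analysis.
From mathcomp Require Import lra zify.
Import Order.TTheory GRing.Theory Num.Theory.
Local Open Scope ring_scope.

Section Comb.
Context {R : realType}.
Local Open Scope fset_scope.

Definition wt (c : group R) : nat := (gT c + (c != c0 R))%N.

Lemma fc_spec (x : group R) : fc x = c0 R \/
  [/\ 0 < gv x, (1 <= gT x)%N, (0 < gn x)%N & fc x = (gv x, (gT x).-1, gn x)].
Proof.
rewrite /fc; case: ifP => [/andP[/andP[a b] c]|_]; [right|left] => //.
Qed.

Lemma fc_wt k (x : group R) : (0 < gv x -> (gT x <= k)%N) -> (wt (fc x) <= k)%N.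
Proof.
move=> h; case: (fc_spec x) => [->|[a b c ->]]; first by rewrite /wt /= eqxx.
have := h a; rewrite /wt /gT /=.
have -> : ((gv x, (x.1.2).-1, gn x) != c0 R) by apply/eqP => -[] e; move: a; rewrite e ltxx.
rewrite /gT in b; lia.
Qed.

Lemma fc_gn (x : group R) : (0 < gn (fc x))%N.
Proof. by case: (fc_spec x) => [->|[a b c ->]]. Qed.

Lemma fc_inj (x y : group R) : fc x != c0 R -> fc y != c0 R -> (fc x).1 = (fc y).1 -> x.1 = y.1.
Proof.
case: (fc_spec x) => [->|[a b c ->]]; first by rewrite eqxx.
case: (fc_spec y) => [->|[a' b' c' ->]]; first by rewrite eqxx.
move=> _ _ /= [e1 e2]; move: b b' e2; rewrite /gT.
case: x e1 {a c} => [[vx tx] nx]; case: y {a' c'} => [[vy ty] ny] /=.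
rewrite /gv /= => -> b b' e; congr pair; lia.
Qed.

Lemma fc_c0 (x : group R) : (fc x).1 = (c0 R).1 -> fc x = c0 R.
Proof.
case: (fc_spec x) => [->//|[a b c ->]] /= [e _]; by move: a; rewrite e ltxx.
Qed.

Definition spec_el (c : group R) : group R := (gv c, gT c, (gn c).-1).

Lemma in_fCc (C : {fset group R}) c y : y \in fCc C c ->
  (exists2 x, x \in C & x != c /\ y = fc x) \/ y = fc (spec_el c).
Proof.
rewrite /fCc in_fsetU in_fset1 => /orP[/imfsetP[x /= xC ->]|/eqP ->]; last by right.
left; exists x; move: xC; rewrite in_fsetD1 => /andP[] // ? ?; split.
Qed.

Lemma fCc_cset (C : {fset group R}) c : is_cset C -> c \in C -> is_cset (fCc C c).
Proof.
case=> h0 hn hu cC; split.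
- rewrite /fCc in_fsetU; have [->|ne] := eqVneq c (c0 R).
    by rewrite in_fset1 /spec_el /fc /= ltxx /= eqxx orbT.
  apply/orP; left; apply/imfsetP; exists (c0 R).
    by rewrite /= in_fsetD1 eq_sym ne h0.
  by rewrite /fc /= ltxx.
- by move=> y /in_fCc [[x _ [_ ->]]|->]; apply: fc_gn.
- have key : forall x y, (x \in C /\ x != c \/ x = spec_el c) ->
                        (y \in C /\ y != c \/ y = spec_el c) ->
                        (fc x).1 = (fc y).1 -> fc x = fc y.
    move=> x y hx hy e.
    have [ex|nx] := eqVneq (fc x) (c0 R).
      by rewrite ex; symmetry; apply: fc_c0; rewrite -e ex.
    have [ey|ny] := eqVneq (fc y) (c0 R).
      by rewrite ey; apply: fc_c0; rewrite e ey.
    have e1 := fc_inj _ _ nx ny e.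
    case: hx => [[xC xc]|xs]; case: hy => [[yC yc]|ys].
    + by rewrite (hu _ _ xC yC e1).
    + move: xc; rewrite (hu x c xC cC) ?eqxx //; rewrite e1 ys.
      by case: (c) => [[? ?] ?].
    + move: yc; rewrite (hu y c yC cC) ?eqxx //; rewrite -e1 xs.
      by case: (c) => [[? ?] ?].
    + by rewrite xs ys.
  move=> y y' /in_fCc hy /in_fCc hy'.
  case: hy => [[x xC [xc ->]]|->]; case: hy' => [[x' xC' [xc' ->]]|->] e;
    apply: key => //; by [left|right].
Qed.

Lemma fCc_wt (C : {fset group R}) c k : c \in C ->
  (forall x, x \in C -> wt x <= k.+1)%N -> forall y, y \in fCc C c -> (wt y <= k)%N.
Proof.
have gen : forall x, (wt x <= k.+1)%N -> (0 < gv x -> (gT x <= k)%N).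
  move=> x; rewrite /wt => h a.
  have : x != c0 R by apply/eqP => e; move: a; rewrite e /= ltxx.
  by move=> ne; rewrite ne in h; lia.
move=> cC hw y /in_fCc [[x xC [_ ->]]|->]; apply: fc_wt.
- exact: gen (hw _ xC).
- exact: gen (hw _ cC).
Qed.

Lemma fCc_C0 : fCc [fset c0 R] (c0 R) = [fset c0 R].
Proof.
apply/fsetP => y; rewrite /fCc in_fsetU.
have -> : [fset c0 R] `\ c0 R = fset0 by apply/fsetP => z; rewrite in_fsetD1 in_fset1 in_fset0; case: eqP.
rewrite (_ : fc (gv (c0 R), gT (c0 R), (gn (c0 R)).-1) = c0 R); last by rewrite /fc /= ltxx.
apply/idP/idP => [/orP[/imfsetP[x /=]|//]|->]; last by rewrite orbT.
by rewrite in_fset0.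
Qed.

Lemma wt0_C0 (C : {fset group R}) : is_cset C -> (forall x, x \in C -> wt x <= 0)%N -> C = [fset c0 R].
Proof.
case=> h0 _ _ hw; apply/fsetP => y; rewrite in_fset1.
apply/idP/eqP => [yC|->//]; have := hw _ yC; rewrite /wt.
by case: eqP => // _; lia.
Qed.


Lemma Vc_mono (V1 V2 : {fset group R} -> R) p (C : {fset group R}) :
  c0 R \in C -> (forall c, c \in C -> V1 (fCc C c) <= V2 (fCc C c)) ->
  Vc V1 p C <= Vc V2 p C.
Proof.
move=> h0 h; rewrite /Vc /= big_seq [X in _ <= X]big_seq.
apply: (big_ind2 (fun a b => a <= b)).
- by rewrite lerD2l h.
- move=> x1 x2 y1 y2 hx hy; rewrite ge_max !le_max.
  by rewrite hx hy orbT.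
- by move=> c cC; rewrite lerD2l h.
Qed.

Lemma Vc_C0 (V : {fset group R} -> R) p : V [fset c0 R] = 0 ->
  Vc V p [fset c0 R] = Num.min 0 p.
Proof.
move=> hV; rewrite /Vc /= fCc_C0 hV addr0 big_seq.
apply: (big_ind (fun a => a = Num.min 0 p)) => //.
- by move=> x y -> ->; rewrite maxxx.
- by move=> c; rewrite in_fset1 => /eqP ->; rewrite fCc_C0 hV addr0.
Qed.

Lemma cset_C0 : is_cset [fset c0 R].
Proof.
split; first by rewrite in_fset1.
- by move=> c; rewrite in_fset1 => /eqP ->.
- by move=> c c'; rewrite !in_fset1 => /eqP -> /eqP ->.
Qed.

End Comb.
Section Meas.
Context {R : realType} {d : measure_display} {T : measurableType d}.
Context {mu : {measure set T -> \bar R}}.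
Hypothesis hmu : mu setT = 1%E.

Lemma int_cst (c : R) : mu.-integrable setT (fun _ => c%:E).
Proof.
apply/integrableP; split; first exact: measurable_cst.
rewrite integral_cst //= hmu mule1; exact: ltry.
Qed.

Lemma Rint_cst (c : R) : Rintegral mu setT (fun _ => c) = c.
Proof. by rewrite Rintegral_cst // hmu /= mulr1. Qed.

Lemma Rint_subc (f : T -> R) (c : R) : mu.-integrable setT (fun x => (f x)%:E) ->
  Rintegral mu setT (fun x => f x - c) = Rintegral mu setT f - c.
Proof.
move=> hf; rewrite RintegralB //; first by rewrite Rint_cst.
exact: int_cst.
Qed.

Lemma Rint_le (f g : T -> R) : mu.-integrable setT (fun x => (f x)%:E) ->
  mu.-integrable setT (fun x => (g x)%:E) -> (forall x, f x <= g x) ->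
  Rintegral mu setT f <= Rintegral mu setT g.
Proof. by move=> hf hg h; apply: le_Rintegral. Qed.

Lemma Rint_le_plus (f g : T -> R) (c : R) : mu.-integrable setT (fun x => (f x)%:E) ->
  mu.-integrable setT (fun x => (g x)%:E) -> (forall x, f x <= g x + c) ->
  Rintegral mu setT f <= Rintegral mu setT g + c.
Proof.
move=> hf hg h.
have hgc : mu.-integrable setT (fun x => (g x + c)%:E).
  apply: eq_integrable (integrableD _ hg (int_cst c)) => //= x _.
rewrite -(Rint_cst c) -RintegralD //; last exact: int_cst.
exact: le_Rintegral.
Qed.

End Meas.

Lemma Rint_ae0 (R : realType) (mu : {measure set R -> \bar R}) (f : R -> R) :
  mu [set p : R | p < 0]%classic = 0%E ->
  mu.-integrable setT (fun p => (f p)%:E) ->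
  (forall p, 0 <= p -> f p = 0) -> Rintegral mu setT f = 0.
Proof.
move=> h0 /integrableP[mf _] hf.
rewrite /Rintegral (ae_eq_integral (fun _ => 0%E)) //; last first.
  exists [set p : R | p < 0]%classic; split => //.
    have -> : [set p : R | p < 0]%classic = `]-oo, 0[%classic.
      by apply/seteqP; split => p /=; rewrite in_itv.
    exact: measurable_itv.
  move=> p /= np; rewrite ltNge; apply/negP => p0; apply: np => _.
  by rewrite hf.
by rewrite integral0.
Qed.
Theorem proposition2 (R : realType) (d : measure_display) (Tx : measurableType d)
  (P : probability Tx R) (K : R.-pker Tx ~> R)
  (u : Tx -> R) (lam : R) (Vs VL VU : {fset group R} -> R) :
  0 <= lam <= 1 ->
  measurable_fun setT u ->
  (* realized fares are nonnegative *)
  (forall x, K x ([set p : R | p < 0])%classic = 0%E) ->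
  let EK := fun (x : Tx) (g : R -> R) => Rintegral (K x) setT g in
  let ind := fun (C : {fset group R}) (x : Tx) =>
    ((0 <= u x + EK x (fun p => Vc Vs p C) - Vs (fC C))%R)%:R : R in
  let Exp := fun (C : {fset group R}) (g : R -> R) =>
    lam * Rintegral P setT (fun x => ind C x * EK x g) in
  (* all expectations below are finite *)
  (forall C, is_cset C -> forall x,
     (K x).-integrable setT (fun p => (Vc Vs p C)%:E) /\
     (K x).-integrable setT (fun p => (Vc VL p C)%:E) /\
     (K x).-integrable setT (fun p => (Vc VU p C)%:E)) ->
  (forall C, is_cset C ->
     [/\ P.-integrable setT (fun x => (Num.max (u x + EK x (fun p => Vc Vs p C) - Vs (fC C)) 0
                                       - Num.max (u x) 0)%:E),
         P.-integrable setT (fun x => (ind (C0 R) x * EK x (fun p => Vc VL p C - VL (fC C)))%:E) &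
         P.-integrable setT (fun x => (ind C x * EK x (fun p => Vc VU p C - VU (fC C)))%:E)]) ->
  (* Bellman equation for V* *)
  (forall C, is_cset C ->
     Vs C = Vs (fC C) + lam * Rintegral P setT (fun x =>
        Num.max (u x + EK x (fun p => Vc Vs p C) - Vs (fC C)) 0 - Num.max (u x) 0)) ->
  Vs (C0 R) = 0 ->
  (* lower bound recursion *)
  VL (C0 R) = 0 ->
  (forall C, is_cset C ->
     VL C = VL (fC C) + Exp (C0 R) (fun p => Vc VL p C - VL (fC C))) ->
  (* upper bound recursion *)
  VU (C0 R) = 0 ->
  (forall C, is_cset C ->
     VU C = VU (fC C) + Exp C (fun p => Vc VU p C - VU (fC C))) ->
  forall C, is_cset C -> VL C <= Vs C <= VU C.
Proof.
move=> /andP[l0 l1] mu_u Kneg EK ind Exp hint1 hint2 HVs Vs0 VL0 HVL VU0 HVU.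
have Kset : forall x, K x setT = 1%E := fun x => prob_kernel x.
have Pset : P setT = 1%E := probability_setT P.
have EK_C0 : forall x, EK x (fun p => Vc Vs p (C0 R)) = 0.
  move=> x; rewrite /EK; apply: (@Rint_ae0 R (K x) _ (Kneg x)); first exact: (hint1 _ cset_C0 x).1.
  by move=> p p0; rewrite Vc_C0 // min_l.
have fC0 : fC (C0 R) = C0 R := fCc_C0.
have ind0 : forall x, ind (C0 R) x = ((0 <= u x)%R)%:R.
  by move=> x; rewrite /ind EK_C0 fC0 Vs0 addr0 subr0.
suff H : forall k C, is_cset C -> (forall c, c \in C -> (wt c <= k)%N) ->
    VL C <= Vs C <= VU C.
  move=> C hC; apply: (H (\max_(c <- C) wt c)) => // c cC.
  exact: leq_bigmax_seq.
elim=> [|k IH] C hC hw.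
  by rewrite (wt0_C0 _ hC hw) Vs0 VL0 VU0 lexx.
have IHc : forall c, c \in C -> VL (fCc C c) <= Vs (fCc C c) <= VU (fCc C c).
  move=> c cC; apply: IH; [exact: fCc_cset | exact: fCc_wt _ _ _ cC hw].
have c0C : c0 R \in C by case: hC.
have /andP[HfL HfU] := IHc _ c0C.
have VcL p : Vc VL p C <= Vc Vs p C.
  by apply: Vc_mono => // c cC; case/andP: (IHc c cC).
have VcU p : Vc Vs p C <= Vc VU p C.
  by apply: Vc_mono => // c cC; case/andP: (IHc c cC).
case: (hint2 C hC) => im iL iU.
have hmax : forall t : R, t <= Num.max t 0 /\ 0 <= Num.max t 0.
  by move=> t; rewrite !le_max !lexx orbT.
rewrite (HVs C hC) (HVL C hC) (HVU C hC) /Exp.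
apply/andP; split.
- have hX : Rintegral P setT (fun x => ind (C0 R) x * EK x (fun p => Vc VL p C - VL (fC C)))
      <= Rintegral P setT (fun x => Num.max (u x + EK x (fun p => Vc Vs p C) - Vs (fC C)) 0
                                       - Num.max (u x) 0) + (Vs (fC C) - VL (fC C)).
    apply: (Rint_le_plus Pset _ _ _ iL im) => x.
    have hle : EK x (fun p => Vc VL p C) <= EK x (fun p => Vc Vs p C).
      apply: (Rint_le _ _ (hint1 C hC x).2.1 (hint1 C hC x).1) => p; exact: VcL.
    have [h1 h2] := hmax (u x + EK x (fun p => Vc Vs p C) - Vs (fC C)).
    rewrite ind0; rewrite /EK in hle h1 h2 *.
    rewrite (Rint_subc (Kset x)); last exact: (hint1 C hC x).2.1.
    case: (leP 0 (u x)) => hu /=.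
    + lra.
    + lra.
  have := ler_wpM2l l0 hX.
  move: HfL; rewrite /fC; nra.
- have hX : Rintegral P setT (fun x => Num.max (u x + EK x (fun p => Vc Vs p C) - Vs (fC C)) 0
                                       - Num.max (u x) 0)
      <= Rintegral P setT (fun x => ind C x * EK x (fun p => Vc VU p C - VU (fC C)))
         + (VU (fC C) - Vs (fC C)).
    apply: (Rint_le_plus Pset _ _ _ im iU) => x.
    have hle : EK x (fun p => Vc Vs p C) <= EK x (fun p => Vc VU p C).
      apply: (Rint_le _ _ (hint1 C hC x).1 (hint1 C hC x).2.2) => p; exact: VcU.
    have [h1 h2] := hmax (u x).
    rewrite /ind; rewrite /EK in hle h1 h2 *.
    rewrite (Rint_subc (Kset x)); last exact: (hint1 C hC x).2.2.
    case: (leP 0 (u x + Rintegral (K x) setT (fun p => Vc Vs p C) - Vs (fC C))) => ht /=.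
    + lra.
    + lra.
  have := ler_wpM2l l0 hX.
  move: HfU; rewrite /fC; nra.
Qed.
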